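(* Let $X\in\mathbb{R}^d$, $Y\in\mathbb{R}$, $H\in\mathbb{R}^q$, $I\in\mathbb{R}^m$ be generated by the linear structural causal model $$X := BX + AI + h(H,\epsilon^X),\qquad Y := X^\top\beta^* + g(H,\epsilon^Y),$$ where $B\in\mathbb{R}^{d\times d}$ with $\operatorname{Id}-B$ invertible, $A\in\mathbb{R}^{d\times m}$, $\beta^*\in\mathbb{R}^d$, $h,g$ are arbitrary measurable functions, $I,H,\epsilon^X,\epsilon^Y$ are jointly independent, and $\operatorname{Cov}[I]$ is invertible. Let $C:=A^\top(\operatorname{Id}-B)^{-\top}\in\mathbb{R}^{m\times d}$ and $\mathcal{B}:=\{\beta\in\mathbb{R}^d : \operatorname{Cov}(I,X)\beta=\operatorname{Cov}(I,Y)\}$. Then for every $j\in\{1,\dots,d\}$: $$\beta^*_j \text{ is identifiable by the moment condition } \operatorname{Cov}(I,Y-X^\top\beta)=0 \iff \operatorname{Null}(C)_j=\{0\},$$ where $\operatorname{Null}(C)_j=\{w_j : w\in\operatorname{Null}(C)\}$. Moreover, whenever $\operatorname{Null}(C)_j=\{0\}$, it holds that $\beta^*_j=\big(\operatorname{Cov}(I,X)^{\dagger}\operatorname{Cov}(I,Y)\big)_j$, where $(\cdot)^\dagger$ denotes the Moore–Penrose inverse.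
   Context: ''$\beta^*_j$ is identifiable by the moment condition'' means that every $\beta\in\mathcal{B}$ (the solution set of $\operatorname{Cov}(I,Y-X^\top\beta)=0$) satisfies $\beta_j=\beta^*_j$, i.e. $\{\beta_j:\beta\in\mathcal{B}\}=\{\beta^*_j\}$. All covariances involved are assumed to exist. $M^{-\top}$ denotes $(M^{-1})^\top$. *)

(* Defs.v *)
From HB Require Import structures.
From mathcomp Require Import all_boot all_order all_algebra.
From mathcomp Require Import all_classical all_reals all_analysis.
Set Implicit Arguments. Unset Strict Implicit. Unset Printing Implicit Defensive.
Import Order.TTheory GRing.Theory Num.Theory.
Local Open Scope classical_set_scope.
Local Open Scope ring_scope.

(* Column vector of the coordinates of an n-tuple (R^n is represented, as a
   measurable space, by n.-tuple R with the product sigma-algebra). *)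
Definition tcol (R : Type) (n : nat) (v : n.-tuple R) : 'cV[R]_n :=
  \col_(i < n) tnth v i.

(* Mutual (joint) independence of four random elements: the product rule
   for all measurable events (subfamilies are obtained with setT). *)
Definition jointly_independent4 {dT} {T : measurableType dT} {R : realType}
  (P : probability T R)
  {d1 d2 d3 d4} {T1 : measurableType d1} {T2 : measurableType d2}
  {T3 : measurableType d3} {T4 : measurableType d4}
  (Z1 : T -> T1) (Z2 : T -> T2) (Z3 : T -> T3) (Z4 : T -> T4) : Prop :=
  forall (A1 : set T1) (A2 : set T2) (A3 : set T3) (A4 : set T4),
    measurable A1 -> measurable A2 -> measurable A3 -> measurable A4 ->
    P (Z1 @^-1` A1 `&` Z2 @^-1` A2 `&` Z3 @^-1` A3 `&` Z4 @^-1` A4) =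
    (P (Z1 @^-1` A1) * P (Z2 @^-1` A2) * P (Z3 @^-1` A3) * P (Z4 @^-1` A4))%E.

(* Real-valued covariance (the library's covariance is extended-real valued;
   it is finite under the square-integrability assumptions used below). *)
Definition rcov {dT} {T : measurableType dT} {R : realType}
  (P : probability T R) (U V : T -> R) : R := fine (covariance P U V).

(* Moore-Penrose inverse, characterised by the four Penrose conditions
   (over the reals the conjugate transpose is the transpose). *)
Definition is_moore_penrose {R : ringType} {m n : nat}
  (M : 'M[R]_(m, n)) (Mp : 'M[R]_(n, m)) : Prop :=
  [/\ M *m Mp *m M = M, Mp *m M *m Mp = Mp,
      (M *m Mp)^T = M *m Mp & (Mp *m M)^T = Mp *m M].

Definition null_proj {R : ringType} {m d : nat} (C : 'M[R]_(m, d)) (j : 'I_d)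
  : set R := [set w j 0 | w in [set w : 'cV[R]_d | C *m w = 0]].

Definition identifiable_by_moment {dT} {T : measurableType dT} {R : realType}
  (P : probability T R) {m d : nat}
  (Icomp : 'I_m -> T -> R) (X : T -> 'cV[R]_d) (Y : T -> R)
  (betastar : 'cV[R]_d) (j : 'I_d) : Prop :=
  [set beta j 0 | beta in
     [set beta : 'cV[R]_d | forall i : 'I_m,
        covariance P (Icomp i) (fun t => Y t - ((X t)^T *m beta) 0 0) = 0%E]]
  = [set betastar j 0].

(* Main.v *)
Require Import Defs.
From HB Require Import structures.
From mathcomp Require Import all_boot all_order all_algebra.
From mathcomp Require Import all_classical all_reals all_analysis.
From mathcomp Require Import measurable_realfun.
Import Order.TTheory GRing.Theory Num.Theory.
Local Open Scope classical_set_scope.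
Local Open Scope ring_scope.

Section indep.
Local Open Scope ereal_scope.
Context dT (T : measurableType dT) (R : realType) (P : probability T R)
  d1 d2 (T1 : measurableType d1) (T2 : measurableType d2).
Variables (Z1 : {mfun T >-> T1}) (Z2 : {mfun T >-> T2}).
Hypothesis indep : forall A B, measurable A -> measurable B ->
  P (Z1 @^-1` A `&` Z2 @^-1` B) = P (Z1 @^-1` A) * P (Z2 @^-1` B).

Definition Zp t := (Z1 t, Z2 t).
Let mZp : measurable_fun setT Zp.
Proof. exact: measurable_fun_pair. Qed.
HB.instance Definition _ := isMeasurableFun.Build _ _ _ _ Zp mZp.

Let mu1 := distribution P Z1.
Let mu2 := distribution P Z2.
Let J := distribution P Zp.

Let joint S : measurable S -> (mu1 \x mu2) S = J S.
Proof.
by move=> mS; apply: product_measure_unique => //.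
Qed.

Variables (u : T1 -> R) (v : T2 -> R).
Hypotheses (mu_ : measurable_fun setT u) (mv : measurable_fun setT v).
Hypotheses (u2 : (u \o Z1) \in Lfun P 2%:E) (v2 : (v \o Z2) \in Lfun P 2%:E).

Let f : (T1 * T2)%type -> \bar R := fun z => (u z.1 * v z.2)%:E.
Let mf : measurable_fun [set: (T1 * T2)%type] f.
Proof.
apply/measurable_EFinP; apply: measurable_funM.
  exact: measurableT_comp.
exact: measurableT_comp.
Qed.

Let Pfin : P setT \is a fin_num := fin_num_measure P _ measurableT.

Let intP : P.-integrable setT (f \o Zp).
Proof.
have := Lfun2_mul_Lfun1 u2 v2.
by move/Lfun1_integrable.
Qed.

Let intJ : J.-integrable setT f.
Proof.
by apply: integrable_pushforward => //; rewrite preimage_setT.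
Qed.

Let int12 : (mu1 \x mu2).-integrable setT f.
Proof.
move/integrableP : intJ => [_ fin]; apply/integrableP; split => //.
rewrite (eq_measure_integral J) //.
by move=> A mA _; apply: joint.
Qed.

Let intv : mu2.-integrable setT (EFin \o v).
Proof.
apply: integrable_pushforward => //.
  exact/measurable_EFinP.
by rewrite preimage_setT; apply/Lfun1_integrable/Lfun_subset12.
Qed.

Let intu : mu1.-integrable setT (EFin \o u).
Proof.
apply: integrable_pushforward => //.
  exact/measurable_EFinP.
by rewrite preimage_setT; apply/Lfun1_integrable/Lfun_subset12.
Qed.

Lemma indep_expectationM :
  'E_P[(u \o Z1) * (v \o Z2)] = 'E_P[u \o Z1] * 'E_P[v \o Z2].
Proof.
rewrite unlock.
transitivity (\int[J]_z f z).
  rewrite /J integral_distribution //.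
transitivity (\int[mu1 \x mu2]_z f z).
  by apply: eq_measure_integral => A mA _; symmetry; exact: joint.
transitivity (\int[mu1]_x fubini_F mu2 f x).
  exact/esym/(integral12_prod_meas1 int12).
rewrite /fubini_F.
have vfin := integrable_fin_num measurableT intv.
transitivity (\int[mu1]_x ((u x)%:E * \int[mu2]_y (EFin \o v) y)).
  apply: eq_integral => x _.
  rewrite /f /=.
  under eq_integral do rewrite EFinM.
  by rewrite integralZl.
rewrite -(fineK vfin).
set c := fine _.
transitivity (\int[mu1]_x (c%:E * (EFin \o u) x)).
  by apply: eq_integral => x _; rewrite muleC.
rewrite integralZl // muleC.
rewrite /mu1 /mu2 !integral_distribution //.
all: try (by apply/measurable_EFinP).
all: try (by apply/Lfun1_integrable/Lfun_subset12).
congr (_ * _); rewrite /c fineK // integral_distribution //.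
- exact/measurable_EFinP.
- by apply/Lfun1_integrable/Lfun_subset12.
Qed.

End indep.

Section pair_indep.
Local Open Scope ereal_scope.
Context dT (T : measurableType dT) (R : realType) (P : probability T R)
  d1 d2 d3 (T1 : measurableType d1) (T2 : measurableType d2)
  (T3 : measurableType d3).
Variables (Z1 : {mfun T >-> T1}) (Z2 : {mfun T >-> T2}) (Z3 : {mfun T >-> T3}).
Hypothesis ind3 : forall A B C, measurable A -> measurable B -> measurable C ->
  P (Z1 @^-1` A `&` Z2 @^-1` B `&` Z3 @^-1` C) =
  P (Z1 @^-1` A) * P (Z2 @^-1` B) * P (Z3 @^-1` C).

Definition Zq t := (Z2 t, Z3 t).
Let mZq : measurable_fun setT Zq.
Proof. exact: measurable_fun_pair. Qed.
HB.instance Definition _ := isMeasurableFun.Build _ _ _ _ Zq mZq.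

Section fixA.
Variables (A : set T1) (mA : measurable A).
Definition condm (S : set (T2 * T3)%type) := P (Z1 @^-1` A `&` Zq @^-1` S).

Let condm0 : condm set0 = 0.
Proof. by rewrite /condm preimage_set0 setI0 measure0. Qed.

Let mZ1A : measurable (Z1 @^-1` A).
Proof. exact: measurable_funPTI. Qed.

Let condm_ge0 S : 0 <= condm S.
Proof. exact: measure_ge0. Qed.

Let condm_sigma_additive : semi_sigma_additive condm.
Proof.
move=> F mF tF mUF; rewrite /condm preimage_bigcup setI_bigcupr.
apply: measure_semi_sigma_additive.
- move=> n; apply: measurableI => //; exact: measurable_funPTI.
- apply/trivIsetP => /= i j _ _ ij.
  rewrite setIACA setIid -preimage_setI.
  by move/trivIsetP : tF => /(_ _ _ _ _ ij) ->//; rewrite preimage_set0 setI0.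
- rewrite -setI_bigcupr -preimage_bigcup; apply: measurableI => //.
  exact: measurable_funPTI.
Qed.

HB.instance Definition _ := isMeasure.Build _ _ _
  condm condm0 condm_ge0 condm_sigma_additive.

End fixA.

Lemma pair_indep A S : measurable A -> measurable S ->
  P (Z1 @^-1` A `&` Zq @^-1` S) = P (Z1 @^-1` A) * P (Zq @^-1` S).
Proof.
move=> mA mS.
have c0 : (0 <= fine (P (Z1 @^-1` A)))%R.
  by apply: fine_ge0; exact: measure_ge0.
pose m2 := mscale (NngNum c0) (distribution P Zq).
pose G : set (set (T2 * T3)%type) :=
  [set C | exists B, measurable B /\ exists C', measurable C' /\ C = B `*` C'].
have PAfin : P (Z1 @^-1` A) \is a fin_num.
  by apply: fin_num_measure; exact: measurable_funPTI.
have : condm A S = m2 S.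
  apply: (measure_unique G (fun _ => setT)) => //.
  - rewrite measurable_prod_measurableType //; congr (<<s _ >>).
    rewrite predeqE; split => [[B mB [C mC <-]]|[B [mB [C [mC ->]]]]].
      by exists B; split => //; exists C.
    by exists B => //; exists C.
  - move=> X Y [X1 [mX1 [X2 [mX2 ->]]]] [Y1 [mY1 [Y2 [mY2 ->]]]].
    rewrite -setXI; exists (X1 `&` Y1); split; first exact: measurableI.
    by exists (X2 `&` Y2); split => //; exact: measurableI.
  - by move=> _; exists setT; split => //; exists setT; split => //; rewrite setXTT.
  - by rewrite bigcup_const //; exists 0%N.
  - move=> _ [B [mB [C [mC ->]]]].
    rewrite /condm.
    transitivity (P (Z1 @^-1` A) * P (Zq @^-1` (B `*` C))); last first.
      by rewrite -[in LHS](fineK PAfin).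
    have -> : Zq @^-1` (B `*` C) = Z2 @^-1` B `&` Z3 @^-1` C by [].
    change (P (Z1 @^-1` A `&` (Z2 @^-1` B `&` Z3 @^-1` C)) = P (Z1 @^-1` A) * P (Z2 @^-1` B `&` Z3 @^-1` C)).
    rewrite setIA ind3 //.
    have := ind3 _ _ _ measurableT mB mC.
    rewrite preimage_setT setTI probability_setT mul1e => ->.
    by rewrite muleA.
  - move=> _; rewrite /condm.
    apply: (le_lt_trans (probability_le1 _ _)); last exact: ltey.
    apply: measurableI; exact: measurable_funPTI.
rewrite /condm => ->.
by rewrite -[in RHS](fineK PAfin).
Qed.

End pair_indep.
Arguments Zq {dT T d2 d3 T2 T3}.

Section indep_cov.
Local Open Scope ereal_scope.
Context dT (T : measurableType dT) (R : realType) (P : probability T R)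
  d1 d2 d3 (T1 : measurableType d1) (T2 : measurableType d2)
  (T3 : measurableType d3).

Lemma indep_cov0 (Z1 : T -> T1) (Z2 : T -> T2) (Z3 : T -> T3)
  (u : T1 -> R) (v : (T2 * T3)%type -> R) :
  measurable_fun setT Z1 -> measurable_fun setT Z2 -> measurable_fun setT Z3 ->
  measurable_fun setT u -> measurable_fun setT v ->
  (forall A B C, measurable A -> measurable B -> measurable C ->
    P (Z1 @^-1` A `&` Z2 @^-1` B `&` Z3 @^-1` C) =
    P (Z1 @^-1` A) * P (Z2 @^-1` B) * P (Z3 @^-1` C)) ->
  (fun t => u (Z1 t)) \in Lfun P 2%:E ->
  (fun t => v (Z2 t, Z3 t)) \in Lfun P 2%:E ->
  covariance P (fun t => u (Z1 t)) (fun t => v (Z2 t, Z3 t)) = 0.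
Proof.
move=> mZ1 mZ2 mZ3 mu mv ind3 u2 v2.
pose Z1m : {mfun T >-> T1} := HB.pack Z1 (isMeasurableFun.Build _ _ _ _ Z1 mZ1).
pose Z2m : {mfun T >-> T2} := HB.pack Z2 (isMeasurableFun.Build _ _ _ _ Z2 mZ2).
pose Z3m : {mfun T >-> T3} := HB.pack Z3 (isMeasurableFun.Build _ _ _ _ Z3 mZ3).
have ind2 := @pair_indep _ _ _ P _ _ _ _ _ _ Z1m Z2m Z3m ind3.
have := @indep_expectationM _ _ _ P _ _ _ _ Z1m (Zq Z2m Z3m) ind2 u v mu mv u2 v2.
have Pfin : P setT \is a fin_num := fin_num_measure P _ measurableT.
have u1 := Lfun_subset12 Pfin u2.
have v1 := Lfun_subset12 Pfin v2.
have uv1 := Lfun2_mul_Lfun1 u2 v2.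
move=> E.
rewrite covarianceE //.
rewrite [X in X - _](_ : _ = 'E_P[u \o Z1m] * 'E_P[v \o Zq Z2m Z3m]); last exact: E.
rewrite subee // fin_numM //; apply: expectation_fin_num => //.
Qed.

End indep_cov.

Section lin.
Context dT (T : measurableType dT) (R : realType) (P : probability T R).

Let Pfin : P setT \is a fin_num := fin_num_measure P _ measurableT.

Lemma L2_add (f g : T -> R) : f \in Lfun P 2%:E -> g \in Lfun P 2%:E ->
  (fun t => f t + g t) \in Lfun P 2%:E.
Proof.
move=> hf hg.
have p1 : (1 <= (2%:R : R)%:E)%E by rewrite lee_fin ler1n.
exact: ((@Lfun_addr_closed _ _ _ P _ p1).2 f g hf hg).
Qed.

Lemma L2_scale (f : T -> R) a : f \in Lfun P 2%:E ->
  (fun t => a * f t) \in Lfun P 2%:E.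
Proof.
move=> hf; have h1 : (1 <= (2%:R : R))%R by rewrite ler1n.
have -> : (fun t => a * f t) = a \o* f by apply/funext => t; rewrite /= mulrC.
exact: (@Lfun_scale _ _ _ P f a _ h1 hf).
Qed.

Lemma L2_opp (f : T -> R) : f \in Lfun P 2%:E ->
  (fun t => - f t) \in Lfun P 2%:E.
Proof.
move=> hf.
exact: (@Lfun_oppr_closed _ _ _ P _ f hf).
Qed.

Lemma rcovE (U V : T -> R) : U \in Lfun P 2%:E -> V \in Lfun P 2%:E ->
  covariance P U V = (rcov P U V)%:E.
Proof.
move=> hU hV; rewrite /rcov fineK //; apply: covariance_fin_num.
- exact: Lfun_subset12.
- exact: Lfun_subset12.
- exact: Lfun2_mul_Lfun1.
Qed.

Lemma L2_sum (I : Type) (a : I -> R) (V : I -> T -> R) (s : seq I) :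
  (forall k, V k \in Lfun P 2%:E) ->
  (fun t => \sum_(k <- s) a k * V k t) \in Lfun P 2%:E.
Proof.
move=> hV; elim: s => [|k s IH].
  have -> : (fun t => \sum_(k <- [::]) a k * V k t) = cst 0.
    by apply/funext => t; rewrite big_nil.
  exact: Lfun_cst.
have -> : (fun t => \sum_(j <- k :: s) a j * V j t) =
   (fun t => a k * V k t + \sum_(j <- s) a j * V j t).
  by apply/funext => t; rewrite big_cons.
by apply: L2_add => //; apply: L2_scale.
Qed.

Lemma cov_sum (I : eqType) (U : T -> R) (a : I -> R) (V : I -> T -> R)
  (s : seq I) :
  U \in Lfun P 2%:E -> (forall k, V k \in Lfun P 2%:E) ->
  (fun t => \sum_(k <- s) a k * V k t) \in Lfun P 2%:E /\
  covariance P U (fun t => \sum_(k <- s) a k * V k t) =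
  (\sum_(k <- s) a k * rcov P U (V k))%:E.
Proof.
move=> hU hV; elim: s => [|k s [IH1 IH2]].
  have -> : (fun t => \sum_(k <- [::]) a k * V k t) = cst 0.
    by apply/funext => t; rewrite big_nil.
  by rewrite big_nil covariance_cst_r; split => //; apply: Lfun_cst.
have -> : (fun t => \sum_(j <- k :: s) a j * V j t) =
   ((a k \o* V k) \+ (fun t => \sum_(j <- s) a j * V j t))%R.
  by apply/funext => t; rewrite big_cons /= mulrC.
have hk := hV k.
have hk' : (a k \o* V k) \in Lfun P 2%:E.
  have -> : (a k \o* V k) = (fun t => a k * V k t) by apply/funext => t; rewrite /= mulrC.
  exact: L2_scale.
split; first by apply: L2_add.
rewrite covarianceDr //.
rewrite IH2 covarianceZr //.
- by rewrite rcovE // big_cons EFinD EFinM.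
- exact: Lfun_subset12.
- exact: Lfun_subset12.
- exact: Lfun2_mul_Lfun1.
Qed.

End lin.

Theorem proposition1
  (R : realType) (dT : measure_display) (T : measurableType dT)
  (P : probability T R)
  (d m q : nat)
  (dEX dEY : measure_display) (EX : measurableType dEX) (EY : measurableType dEY)
  (I : T -> m.-tuple R) (H : T -> q.-tuple R) (epsX : T -> EX) (epsY : T -> EY)
  (X : T -> 'cV[R]_d) (Y : T -> R)
  (B : 'M[R]_d) (A : 'M[R]_(d, m)) (betastar : 'cV[R]_d)
  (h : (q.-tuple R * EX)%type -> d.-tuple R) (g : (q.-tuple R * EY)%type -> R) :
  measurable_fun [set: T] I -> measurable_fun [set: T] H ->
  measurable_fun [set: T] epsX -> measurable_fun [set: T] epsY ->
  measurable_fun [set: q.-tuple R * EX] h ->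
  measurable_fun [set: q.-tuple R * EY] g ->
  (1%:M - B) \in unitmx ->
  (forall t, X t = B *m X t + A *m tcol (I t) + tcol (h (H t, epsX t))) ->
  (forall t, Y t = ((X t)^T *m betastar) 0 0 + g (H t, epsY t)) ->
  jointly_independent4 P I H epsX epsY ->
  (* all covariances involved exist: finite second moments *)
  (forall i : 'I_m, (fun t => tnth (I t) i) \in Lfun P 2%:E) ->
  (forall j : 'I_d, (fun t => X t j 0) \in Lfun P 2%:E) ->
  Y \in Lfun P 2%:E ->
  (* Cov[I] invertible *)
  \matrix_(i < m, k < m) rcov P (fun t => tnth (I t) i) (fun t => tnth (I t) k)
    \in unitmx ->
  let C : 'M[R]_(m, d) := A^T *m (invmx (1%:M - B))^T in
  let CovIX : 'M[R]_(m, d) :=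
    \matrix_(i < m, j < d) rcov P (fun t => tnth (I t) i) (fun t => X t j 0) in
  let CovIY : 'cV[R]_m :=
    \col_(i < m) rcov P (fun t => tnth (I t) i) Y in
  forall j : 'I_d,
    (identifiable_by_moment P (fun i t => tnth (I t) i) X Y betastar j
       <-> null_proj C j = [set 0])
    /\ (null_proj C j = [set 0] ->
        forall Mp : 'M[R]_(d, m), is_moore_penrose CovIX Mp ->
        betastar j 0 = (Mp *m CovIY) j 0).
Proof.
move=> mI mH mEX mEY mh mg uB hXe hYe ind hI hX hY hSig C CovIX CovIY j.
set Sig := \matrix_(i < m, k < m) _ in hSig.
pose N := invmx (1%:M - B).
pose Ii (i : 'I_m) := fun t => tnth (I t) i.
pose Xf (k : 'I_d) := fun t => X t k 0.
pose hf (k : 'I_d) := fun t => tnth (h (H t, epsX t)) k.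
pose gf := fun t => g (H t, epsY t).
have WX t : (1%:M - B) *m X t = A *m tcol (I t) + tcol (h (H t, epsX t)).
  by rewrite mulmxBl mul1mx {1}(hXe t) addrAC (addrAC (B *m X t)) subrr add0r.
have Xe t : X t = N *m (A *m tcol (I t) + tcol (h (H t, epsX t))).
  by rewrite -WX /N mulKmx.
have ind3X : forall A1 A2 A3, measurable A1 -> measurable A2 -> measurable A3 ->
    P (I @^-1` A1 `&` H @^-1` A2 `&` epsX @^-1` A3) =
    (P (I @^-1` A1) * P (H @^-1` A2) * P (epsX @^-1` A3))%E.
  move=> A1 A2 A3 m1 m2 m3.
  have := ind A1 A2 A3 setT m1 m2 m3 measurableT.
  by rewrite !preimage_setT setIT probability_setT mule1.
have ind3Y : forall A1 A2 A4, measurable A1 -> measurable A2 -> measurable A4 ->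
    P (I @^-1` A1 `&` H @^-1` A2 `&` epsY @^-1` A4) =
    (P (I @^-1` A1) * P (H @^-1` A2) * P (epsY @^-1` A4))%E.
  move=> A1 A2 A4 m1 m2 m4.
  have := ind A1 A2 setT A4 m1 m2 measurableT m4.
  by rewrite !preimage_setT setIT probability_setT mule1.
set K := 1%:M - B in WX.
have hfE k : hf k = (fun t => \sum_(l <- index_enum 'I_d) K k l * Xf l t +
    \sum_(l <- index_enum 'I_m) (- A k l) * Ii l t).
  apply/funext => t.
  have := congr1 (fun M : 'cV[R]_d => M k 0) (WX t); rewrite /tcol !mxE => E.
  under [X in _ = _ + X]eq_bigr do rewrite mulNr.
  rewrite sumrN /Xf /Ii /hf.
  rewrite E /=.
  under eq_bigr do rewrite mxE.
  by rewrite addrAC subrr add0r.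
have hfL2 k : hf k \in Lfun P 2%:E.
  by rewrite hfE; apply: L2_add; apply: L2_sum.
have covIh i k : covariance P (Ii i) (hf k) = 0%E.
  apply: (@indep_cov0 _ _ _ P _ _ _ _ _ _ I H epsX (fun x => tnth x i)
    (fun p => tnth (h p) k) mI mH mEX _ _ ind3X (hI i) (hfL2 k)).
  - exact: measurable_tnth.
  - exact: measurableT_comp (measurable_tnth k) mh.
have gfE : gf = (fun t => Y t + \sum_(l <- index_enum 'I_d) (- betastar l 0) * Xf l t).
  apply/funext => t; rewrite /gf (hYe t) mxE.
  under [X in _ = _ + X]eq_bigr do rewrite mulNr.
  rewrite sumrN.
  under eq_bigr do rewrite mxE.
  by rewrite /Xf; under [X in _ = _ + _ - X]eq_bigr do rewrite mulrC; rewrite addrAC subrr add0r.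
have gfL2 : gf \in Lfun P 2%:E.
  by rewrite gfE; apply: L2_add => //; apply: L2_sum.
have covIg i : covariance P (Ii i) gf = 0%E.
  apply: (@indep_cov0 _ _ _ P _ _ _ _ _ _ I H epsY (fun x => tnth x i)
    g mI mH mEY _ _ ind3Y (hI i) gfL2).
  - exact: measurable_tnth.
  - exact: mg.
pose Wf (l : 'I_d) := fun t => \sum_(p <- index_enum 'I_m) A l p * Ii p t + hf l t.
have Xfs k : Xf k = fun t => \sum_(l <- index_enum 'I_d) N k l * Wf l t.
  apply/funext => t; rewrite /Xf (Xe t) mxE.
  apply: eq_bigr => l _; rewrite /Wf /hf /tcol !mxE.
  by congr (_ * (_ + _)); apply: eq_bigr => p _; rewrite mxE.
have WfL2 l : Wf l \in Lfun P 2%:E.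
  by apply: L2_add => //; apply: L2_sum.
have SigE i p : rcov P (Ii i) (Ii p) = Sig i p by rewrite /Sig mxE.
have covW i l : covariance P (Ii i) (Wf l) =
    (\sum_(p <- index_enum 'I_m) A l p * Sig i p)%:E.
  rewrite /Wf.
  have -> : (fun t => \sum_(p <- index_enum 'I_m) A l p * Ii p t + hf l t) =
    ((fun t => \sum_(p <- index_enum 'I_m) A l p * Ii p t) \+ hf l)%R by [].
  rewrite covarianceDr; [|exact: hI|by apply: L2_sum|exact: hfL2].
  rewrite covIh adde0 (@cov_sum _ _ _ P _ (Ii i) (fun p => A l p) Ii (index_enum 'I_m) (hI i) hI).2.
  by congr (_%:E); apply: eq_bigr => p _; rewrite SigE.
have MSC : CovIX = Sig *m C.
  apply/matrixP => i0 k0; rewrite /CovIX !mxE /rcov.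
  rewrite -/(Xf k0) Xfs (@cov_sum _ _ _ P _ (Ii i0) (fun l => N k0 l) Wf (index_enum 'I_d) (hI i0) WfL2).2 /=.
  under eq_bigr do rewrite /rcov covW /=.
  rewrite /C.
  under [RHS]eq_bigr do rewrite !mxE big_distrr /=.
  rewrite exchange_big /=.
  apply: eq_bigr => l _; rewrite big_distrr /=.
  apply: eq_bigr => p _; rewrite !mxE.
  by rewrite mulrCA mulrA [in RHS]mulrC.
have Ys : Y = ((fun t => \sum_(l <- index_enum 'I_d) betastar l 0 * Xf l t) \+ gf)%R.
  apply/funext => t; rewrite /= /gf (hYe t) mxE.
  by congr (_ + _); apply: eq_bigr => l _; rewrite mxE mulrC.
have YXb : CovIY = CovIX *m betastar.
  apply/matrixP => i0 k0; rewrite (ord1 k0) /CovIY !mxE /rcov.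
  rewrite Ys covarianceDr; [|exact: hI|by apply: L2_sum|exact: gfL2].
  rewrite covIg adde0.
  rewrite (@cov_sum _ _ _ P _ (Ii i0) (fun l => betastar l 0) Xf (index_enum 'I_d) (hI i0) hX).2 /=.
  by apply: eq_bigr => l _; rewrite /CovIX mxE mulrC.
have covB (beta : 'cV[R]_d) i0 :
    covariance P (fun t => tnth (I t) i0) (fun t => Y t - ((X t)^T *m beta) 0 0) =
    (CovIY i0 0 - (CovIX *m beta) i0 0)%:E.
  have -> : (fun t => Y t - ((X t)^T *m beta) 0 0) =
      (Y \- (fun t => \sum_(l <- index_enum 'I_d) beta l 0 * Xf l t))%R.
    apply/funext => t; rewrite /= mxE; congr (_ - _).
    by apply: eq_bigr => l _; rewrite mxE mulrC.
  rewrite covarianceBr; [|exact: hI|exact: hY|by apply: L2_sum].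
  rewrite (@rcovE _ _ _ P (Ii i0) Y (hI i0) hY).
  rewrite (@cov_sum _ _ _ P _ (Ii i0) (fun l => beta l 0) Xf (index_enum 'I_d) (hI i0) hX).2 /=.
  rewrite -EFinB /CovIY !mxE; congr (_ - _)%:E.
  by apply: eq_bigr => l _; rewrite /CovIX mxE mulrC.
have SigK (w : 'cV[R]_m) : Sig *m w = 0 -> w = 0.
  by move=> hw; rewrite -(mulKmx hSig w) hw mulmx0.
have covBeq (beta : 'cV[R]_d) :
    (forall i0, covariance P (fun t => tnth (I t) i0)
       (fun t => Y t - ((X t)^T *m beta) 0 0) = 0%E) <->
    CovIX *m beta = CovIY.
  split => [hc|hb i0].
  - apply/colP => i0; have := hc i0; rewrite covB.
    set u := CovIX *m beta.
    move/(congr1 fine) => /= /eqP; rewrite subr_eq0 => /eqP ->.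
    by [].
  - by rewrite covB hb subrr.
have keyB (beta : 'cV[R]_d) :
    (forall i0, covariance P (fun t => tnth (I t) i0)
       (fun t => Y t - ((X t)^T *m beta) 0 0) = 0%E) <->
    C *m (beta - betastar) = 0.
  rewrite covBeq; split => [hb|hb].
  - by apply: SigK; rewrite mulmxA -MSC mulmxBr hb YXb subrr.
  - apply/eqP; rewrite YXb -subr_eq0 -mulmxBr MSC -mulmxA hb mulmx0.
    by [].
split.
- rewrite /identifiable_by_moment; split.
  + move=> hid; apply/seteqP; split => x.
    * case=> w /= Cw <-.
      have : [set beta j 0 | beta in [set beta : 'cV[R]_d | forall i : 'I_m,
          covariance P (fun t => tnth (I t) i)
            (fun t => Y t - ((X t)^T *m beta) 0 0) = 0%E]] ((betastar + w) j 0).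
        exists (betastar + w) => //=.
        by apply/keyB; rewrite addrAC subrr add0r.
      rewrite hid /= mxE => /eqP; rewrite -subr_eq0 addrAC subrr add0r => /eqP.
      by [].
    * move=> /= ->; exists 0; first by rewrite /= mulmx0.
      by rewrite mxE.
  + move=> hnp; apply/seteqP; split => x.
    * case=> beta /= hb <-.
      have Cw := (keyB beta).1 hb.
      have : null_proj C j ((beta - betastar) j 0) by exists (beta - betastar).
      by rewrite hnp /= !mxE => /eqP; rewrite subr_eq0 => /eqP.
    * move=> /= ->; exists betastar => //.
      by apply/(keyB betastar).2; rewrite subrr mulmx0.
- move=> hnp Mp [mp1 mp2 mp3 mp4].
  pose w := betastar - Mp *m CovIX *m betastar.
  have Cw : C *m w = 0.
    apply: SigK; rewrite mulmxA -MSC /w mulmxBr !mulmxA mp1 subrr.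
    by [].
  have : null_proj C j (w j 0) by exists w.
  rewrite hnp /w /= mxE [X in _ + X = _ -> _]mxE => /eqP; rewrite subr_eq0 => /eqP ->.
  by rewrite YXb mulmxA.
Qed.
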